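(* Let $r\ge2$ and let $t\ge3$ be an odd integer. Let $(X,\mathcal A)$ be a $(k_{t-1},b_r)$ resolvable configuration and let $E$ be a subset of $X$ with $|E|=t$. Then there exists a line $A\in\mathcal A$ with $|E\cap A|=1$.
   Context: A $(k_{t-1},b_r)$ configuration is a pair $(X,\mathcal A)$ where $X$ is a set of $k$ points and $\mathcal A$ is a collection of $b$ subsets of $X$ (lines) such that each line contains exactly $r$ points, each point belongs to exactly $t-1$ lines, and every pair of distinct points belongs to at most one line. It is resolvable if the lines can be partitioned into $t-1$ parallel classes, a parallel class being a set of lines that partitions $X$. *)

(* Defs.v *)
From mathcomp Require Import all_boot.
Set Implicit Arguments. Unset Strict Implicit. Unset Printing Implicit Defensive.

(* A (k_{t-1}, b_r) configuration on the point set X (k = #|X|, b = #|L|):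
   L is the collection of lines (subsets of X). *)
Definition configuration (X : finType) (L : {set {set X}}) (r t : nat) : Prop :=
  [/\ (forall A, A \in L -> #|A| = r),
      (forall x : X, #|[set A in L | x \in A]| = t.-1) &
      (forall x y : X, x != y -> #|[set A in L | (x \in A) && (y \in A)]| <= 1)].

Definition parallel_class (X : finType) (C : {set {set X}}) : Prop :=
  forall x : X, #|[set A in C | x \in A]| = 1.

Definition resolvable (X : finType) (L : {set {set X}}) (t : nat) : Prop :=
  exists P : 'I_(t.-1) -> {set {set X}},
    [/\ (forall i, parallel_class (P i)),
        (forall A, A \in L -> exists2 i, A \in P i & forall j, A \in P j -> j = i) &
        (forall i A, A \in P i -> A \in L)].

(* Main.v *)
Require Import Defs.
From mathcomp Require Import all_boot.

Lemma card_sum (T : finType) (S : {set T}) (p : pred T) :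
  #|[set A in S | p A]| = \sum_(A in S) (p A : nat).
Proof.
rewrite -sum1_card (eq_bigl (fun A => (A \in S) && p A)); last first.
  by move=> A; rewrite inE.
rewrite big_mkcondr /=; apply: eq_bigr => A _; by case: (p A).
Qed.

Lemma dcount (X : finType) (S : {set {set X}}) (E : {set X}) :
  \sum_(x in E) #|[set A in S | x \in A]| = \sum_(A in S) #|E :&: A|.
Proof.
under eq_bigr => x _ do rewrite card_sum.
rewrite exchange_big /=; apply: eq_bigr => A _.
by rewrite -card_sum; congr #|_|; apply/setP => y; rewrite !inE andbC.
Qed.

Theorem lemma11 (X : finType) (L : {set {set X}}) (r t : nat) :
  2 <= r -> 3 <= t -> odd t ->
  configuration L r t -> resolvable L t ->
  forall E : {set X}, #|E| = t ->
  exists2 A, A \in L & #|E :&: A| = 1.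
Proof.
move=> r2 t3 ot [Hr Hdeg Hpair] [P [HP HPL HLP]] E cE.
case: (boolP [exists A in L, #|E :&: A| == 1]).
  by move=> /exists_inP [A AL /eqP h]; exists A.
move=> /exists_inPn H1.
have two : forall x A, x \in E -> A \in L -> x \in A -> #|E :&: A| = 2.
  move=> x A xE AL xA.
  pose Lx := [set B in L | x \in B].
  pose f B := #|(E :\ x) :&: B|.
  have fE (B : {set X}) : x \in B -> #|E :&: B| = (f B).+1.
    move=> xB; rewrite (cardsD1 x) inE xE xB /= add1n /f; congr _.+1.
    by apply: eq_card => y; rewrite !inE; case: (y == x); case: (y \in E).
  have f1 (B : {set X}) : B \in Lx -> 0 < f B.
    rewrite inE => /andP [BL xB]; have := H1 B BL; rewrite fE //.
    have : 0 < #|E :&: B| by apply/card_gt0P; exists x; rewrite inE xE.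
    by rewrite fE //; case: (f B).
  have Hs : \sum_(B in Lx) f B <= t.-1.
    rewrite -dcount.
    have -> : t.-1 = \sum_(y in E :\ x) 1.
      by rewrite sum1_card -cE (cardsD1 x E) xE.
    apply: leq_sum => y; rewrite !inE => /andP [yx _].
    have -> : [set B in Lx | y \in B] = [set B in L | (x \in B) && (y \in B)].
      by apply/setP => B; rewrite !inE andbA.
    by apply: Hpair; rewrite eq_sym.
  have Hs2 : \sum_(B in Lx) f B = \sum_(B in Lx) (f B).-1 + t.-1.
    rewrite -(Hdeg x) -sum1_card -big_split /=.
    by apply: eq_bigr => B /f1; rewrite addn1 => /prednK.
  have ALx : A \in Lx by rewrite inE AL xA.
  have Hz : \sum_(B in Lx) (f B).-1 = 0.
    by apply/eqP; rewrite -leqn0 -(leq_add2r t.-1) -Hs2.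
  have : (f A).-1 <= 0 by rewrite -Hz (bigD1 A) //= leq_addr.
  rewrite fE //; move: (f1 A ALx); case: (f A) => [|[|n]] //.
have t0 : 0 < t.-1 by rewrite -ltnS prednK // ltnW // ltnW.
pose i0 : 'I_(t.-1) := Ordinal t0.
have := @dcount X (P i0) E.
rewrite (eq_bigr (fun _ => 1)); last by move=> x _; apply: HP.
rewrite sum1_card cE => ht.
suff : ~~ odd t by rewrite ot.
rewrite ht; apply: (big_ind (fun n => ~~ odd n)) => //.
  by move=> a b ha hb; rewrite oddD (negbTE ha) (negbTE hb).
move=> A AP.
case: (set_0Vmem (E :&: A)) => [-> | [x]]; first by rewrite cards0.
rewrite inE => /andP [xE xA].
by rewrite (two x A xE (HLP _ _ AP) xA).
Qed.
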